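(* For every Eulerian poset $P$ of rank $n+1$, the polynomial $(1+q)^{\lceil n/2\rceil}$ divides $\Theta(\Psi(P))$ in $\mathbb{Z}[q]$.
   Context: A graded poset $P$ with minimum $\hat0$ and maximum $\hat1$ is Eulerian if every interval $[x,y]$ with $x<y$ has as many elements of even rank as of odd rank. For $P$ of rank $n+1$ with rank function $\rho$, the $\mathbf{a}\mathbf{b}$-index is $\Psi(P)=\sum_{S\subseteq\{1,\dots,n\}} f_S\, v_S$, where for $S=\{s_1<\cdots<s_k\}$, $f_S$ is the number of chains $\hat0<x_1<\cdots<x_k<\hat1$ with $\rho(x_i)=s_i$, and $v_S=v_1\cdots v_n$ with $v_i=\mathbf{b}$ if $i\in S$, $v_i=\mathbf{a}-\mathbf{b}$ otherwise ($\mathbf{a},\mathbf{b}$ non-commuting variables). The Major MacMahon map $\Theta:\mathbb{Z}\langle\mathbf{a},\mathbf{b}\rangle\to\mathbb{Z}[q]$ is linear with $\Theta(u_1\cdots u_n)=\prod_{i:\,u_i=\mathbf{b}}q^i$ on monomials. *)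

(* Defs.v *)
From HB Require Import structures.
From mathcomp Require Import all_boot all_order all_algebra.
Set Implicit Arguments. Unset Strict Implicit. Unset Printing Implicit Defensive.
Import Order.TTheory GRing.Theory.

Definition covers d (T : finPOrderType d) (x y : T) : bool :=
  (x < y)%O && [forall t : T, ~~ ((x < t)%O && (t < y)%O)].

Definition graded_with d (T : finPOrderType d) (z o : T) (rho : T -> nat) : Prop :=
  [/\ forall x : T, (z <= x)%O,
      forall x : T, (x <= o)%O,
      rho z = 0%N &
      forall x y : T, covers x y -> rho y = (rho x).+1].

Definition eulerian d (T : finPOrderType d) (rho : T -> nat) : Prop :=
  forall x y : T, (x < y)%O ->
    #|[set t : T | (x <= t)%O && (t <= y)%O && ~~ odd (rho t)]| =
    #|[set t : T | (x <= t)%O && (t <= y)%O && odd (rho t)]|.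

Definition is_chain d (T : finPOrderType d) (C : {set T}) : bool :=
  [forall x in C, forall y in C, (x <= y)%O || (y <= x)%O].

(* Positions 1..n are encoded by i : 'I_n standing for i.+1.
   flag_f S = number of chains z < x_1 < ... < x_k < o whose rank set is S. *)
Definition flag_f d (T : finPOrderType d) (z o : T) (rho : T -> nat) (n : nat)
  (S : {set 'I_n}) : nat :=
  #|[set C : {set T} | [&& is_chain C,
       [forall x in C, (z < x)%O && (x < o)%O],
       [forall x in C, exists i in S, rho x == (val i).+1] &
       [forall i in S, exists x in C, rho x == (val i).+1]]]|.

(* Homogeneous degree-n elements of Z<a,b> are represented by their coefficient
   function on words of length n; a word is an n.-tuple bool, true = b, false = a. *)
(* Coefficient of the word w in v_S = v_1 ... v_n, v_i = b if i in S, a - b otherwise. *)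
Definition vS_coef (n : nat) (S : {set 'I_n}) (w : n.-tuple bool) : int :=
  \prod_(i < n) (if i \in S then (if tnth w i then 1 else 0)
                 else (if tnth w i then -1 else 1))%R.

Definition ab_index d (T : finPOrderType d) (z o : T) (rho : T -> nat) (n : nat)
  : {ffun n.-tuple bool -> int} :=
  [ffun w => (\sum_(S : {set 'I_n}) (flag_f z o rho S)%:Z * vS_coef S w)%R].

Definition Theta (n : nat) (F : {ffun n.-tuple bool -> int}) : {poly int} :=
  (\sum_(w : n.-tuple bool) F w *: \prod_(i < n | tnth w i) 'X^((val i).+1))%R.

(* Main.v *)
Require Import Defs.
From HB Require Import structures.
From mathcomp Require Import all_boot all_order all_algebra.
From mathcomp Require Import ring.
From mathcomp Require Import zify.
From Stdlib Require Import Classical.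
Import Order.TTheory GRing.Theory.
Section Div.
Local Open Scope ring_scope.

Lemma onepX : (1 + 'X : {poly rat}) = 'X - (-1)%:P.
Proof. by rewrite polyCN opprK addrC. Qed.

Lemma dvd_even (k : nat) : ~~ odd k -> (1 + 'X : {poly rat}) %| 1 - 'X^k.
Proof.
move=> Hk; rewrite onepX dvdp_XsubCl /root !hornerE -signr_odd (negbTE Hk) expr0.
by rewrite subrr.
Qed.

Lemma dvd_odd (k : nat) : odd k -> (1 + 'X : {poly rat}) %| 1 + 'X^k.
Proof.
move=> Hk; rewrite onepX dvdp_XsubCl /root !hornerE -signr_odd Hk expr1.
by rewrite subrr.
Qed.

Lemma dvd_run (m a : nat) :
  (1 + 'X : {poly rat}) ^+ m %| \prod_(a.+1 <= k < a.+1 + m.*2) (1 - 'X^k).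
Proof.
elim: m a => [|m IH] a; first by rewrite expr0 dvd1p.
rewrite doubleS addnS addnS (@big_ltn _ _ _ a.+1); last lia.
rewrite (@big_ltn _ _ _ a.+2); last lia.
rewrite mulrA exprS; apply: dvdp_mul; last first.
  have -> : ((a.+1 + m.*2).+2 = (a.+2).+1 + m.*2)%N by lia.
  exact: IH.
case Ha: (odd a).
  by apply: dvdp_mulr; apply: dvd_even; rewrite /= Ha.
by apply: dvdp_mull; apply: dvd_even; rewrite /= Ha.
Qed.

Lemma dvd_marks (mkf : nat -> bool) (N : nat) :
  (forall a b, (a < b)%N -> (b <= N)%N -> mkf a -> mkf b ->
     (forall k, (a < k < b)%N -> ~~ mkf k) -> odd (b - a)) ->
  forall a b, (a < b)%N -> (b <= N)%N -> mkf a -> mkf b ->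
  (1 + 'X : {poly rat}) ^+ (b./2 - a.+1./2) %|
     \prod_(a.+1 <= k < b) (if mkf k then 1 + 'X^k else 1 - 'X^k).
Proof.
move=> Hgood.
suff H : forall s a b, (b - a <= s)%N -> (a < b)%N -> (b <= N)%N -> mkf a -> mkf b ->
  (1 + 'X : {poly rat}) ^+ (b./2 - a.+1./2) %|
     \prod_(a.+1 <= k < b) (if mkf k then 1 + 'X^k else 1 - 'X^k).
  by move=> a b; apply: H (leqnn _).
elim=> [|s IH] a b Hs Hab HbN Ha Hb; first by move: Hs; rewrite leqn0 subn_eq0 leqNgt Hab.
have exP : exists k, (a < k)%N && mkf k by exists b; rewrite Hab Hb.
case: (ex_minnP exP) => a' /andP [Haa' Ha'] Hmin.
have Ha'b : (a' <= b)%N by apply: Hmin; rewrite Hab Hb.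
have Hgap : forall k, (a < k < a')%N -> ~~ mkf k.
  move=> k /andP [Hak Hka']; apply/negP => Hk.
  by move: (Hmin k); rewrite Hak Hk => /(_ isT); rewrite leqNgt Hka'.
have Hodd := Hgood a a' Haa' (leq_trans Ha'b HbN) Ha Ha' Hgap.
set m := (a' - a)./2.
have Ea' : a' = (a.+1 + m.*2)%N.
  have := odd_double_half (a' - a); rewrite Hodd -/m; lia.
rewrite (big_cat_nat Haa' Ha'b) /=.
have E1 : \prod_(a.+1 <= k < a') (if mkf k then 1 + 'X^k else 1 - 'X^k) =
          \prod_(a.+1 <= k < a') (1 - 'X^k : {poly rat}).
  apply: eq_big_nat => k Hk; by rewrite (negbTE (Hgap k Hk)).
rewrite E1.
have Hrun : (1 + 'X : {poly rat}) ^+ m %| \prod_(a.+1 <= k < a') (1 - 'X^k : {poly rat}).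
  by rewrite Ea'; apply: dvd_run.
case: (ltngtP a' b) => [Hlt|Hgt|Heq]; last first.
- rewrite Heq [X in _ * X]big_geq // mulr1.
  apply: (@dvdp_trans _ ((1 + 'X) ^+ m)); last by rewrite -Heq.
  apply: (dvdp_exp2l (1 + 'X : {poly rat})). rewrite -Heq Ea' ?uphalfE -!divn2; lia.
- by move: Ha'b; rewrite leqNgt Hgt.
rewrite [X in _ * X](@big_ltn _ _ _ a') // Ha'.
have IH' := IH a' b ltac:(lia) Hlt HbN Ha' Hb.
have Hmid : (1 + 'X : {poly rat}) ^+ (odd a') %| 1 + 'X^a'.
  case Ho: (odd a'); first by rewrite expr1; apply: dvd_odd.
  by rewrite expr0 dvd1p.
apply: (@dvdp_trans _ ((1 + 'X) ^+ (m + odd a' + (b./2 - a'.+1./2)))).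
  apply: dvdp_exp2l; rewrite Ea' ?uphalfE -!divn2; move: Hlt; rewrite Ea' => Hlt; lia.
rewrite !exprD -mulrA; apply: dvdp_mul => //; exact: dvdp_mul.
Qed.

End Div.
Section ThetaSec.
Local Open Scope ring_scope.
Lemma sum_tuple_prod (R : comRingType) (n : nat) (g : 'I_n -> bool -> R) :
  \sum_(w : n.-tuple bool) \prod_(i < n) g i (tnth w i) =
  \prod_(i < n) (g i true + g i false).
Proof.
rewrite bigA_distr.
rewrite (reindex (fun J : {set 'I_n} => [tuple i \in J | i < n])).
  by apply: eq_bigr => J _; apply: eq_bigr => i _; rewrite tnth_mktuple; case: (i \in J).
exists (fun w : n.-tuple bool => [set i | tnth w i]) => [J _ | w _].
  by apply/setP => i; rewrite inE tnth_mktuple.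
by apply: eq_from_tnth => i; rewrite tnth_mktuple inE.
Qed.

Lemma Theta_vS (n : nat) (S : {set 'I_n}) :
  \sum_(w : n.-tuple bool) vS_coef S w *: \prod_(i < n | tnth w i) ('X^((val i).+1) : {poly int})
  = \prod_(i < n) (if i \in S then 'X^((val i).+1) else 1 - 'X^((val i).+1)).
Proof.
pose g (i : 'I_n) (b : bool) : {poly int} :=
  ((if i \in S then (if b then 1 else 0) else (if b then -1 else 1))%:P *
   (if b then 'X^((val i).+1) else 1)).
transitivity (\sum_(w : n.-tuple bool) \prod_(i < n) g i (tnth w i)).
  apply: eq_bigr => w _.
  rewrite /g big_split /= -mul_polyC /vS_coef rmorph_prod /=.
  by congr (_ * _); rewrite big_mkcond.
rewrite sum_tuple_prod; apply: eq_bigr => i _; rewrite /g.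
case: (i \in S); rewrite ?mul1r ?mulr1 ?mul0r ?addr0 ?polyC1 ?polyC0 ?mul1r //.
by rewrite polyCN mulN1r addrC.
Qed.

Lemma ThetaE d (T : finPOrderType d) (z o : T) (rho : T -> nat) (n : nat) :
  Theta (ab_index z o rho n) = \sum_(S : {set 'I_n}) (flag_f z o rho S)%:Z *:
     \prod_(i < n) (if i \in S then 'X^((val i).+1) else 1 - 'X^((val i).+1)).
Proof.
rewrite /Theta.
under eq_bigr do rewrite ffunE scaler_suml.
rewrite exchange_big /=; apply: eq_bigr => S _.
rewrite -Theta_vS scaler_sumr; apply: eq_bigr => w _.
by rewrite scalerA.
Qed.
End ThetaSec.

Section Poset.
Variables (d : Order.disp_t) (T : finPOrderType d) (z o : T) (rho : T -> nat) (n : nat).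
Hypothesis Hg : graded_with z o rho.
Hypothesis Ho : rho o = n.+1.

Lemma rank_lt {x y : T} : (x < y)%O -> rho x < rho y.
Proof.
case: Hg => _ _ _ Hc.
suff H : forall k (x y : T), #|[set t | (x < t)%O && (t <= y)%O]| <= k ->
   (x < y)%O -> rho x < rho y by apply: H.
elim=> [|k IH] {}x {}y Hk Hxy.
  have : y \in [set t | (x < t)%O && (t <= y)%O] by rewrite inE Hxy lexx.
  move=> Hy; have : 0 < #|[set t | (x < t)%O && (t <= y)%O]| by apply/card_gt0P; exists y.
  by rewrite lt0n; move: Hk; rewrite leqn0 => /eqP ->.
case Hcov: (covers x y); first by rewrite (Hc _ _ Hcov).
move: Hcov; rewrite /covers Hxy /= => /negbT; rewrite negb_forall => /existsP [t]; rewrite negbK => /andP [Hxt Hty].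
have Hp1 : [set s | (x < s)%O && (s <= t)%O] \proper [set s | (x < s)%O && (s <= y)%O].
  apply/properP; split.
    apply/subsetP => s; rewrite !inE => /andP [-> Hs] /=; exact: (le_trans Hs (ltW Hty)).
  exists y; first by rewrite inE Hxy lexx.
  by rewrite inE Hxy /= lt_geF.
have Hp2 : [set s | (t < s)%O && (s <= y)%O] \proper [set s | (x < s)%O && (s <= y)%O].
  apply/properP; split.
    apply/subsetP => s; rewrite !inE => /andP [Hs ->]; rewrite andbT; exact: (lt_trans Hxt Hs).
  exists t; first by rewrite inE Hxt (ltW Hty).
  by rewrite inE ltxx.
have H1 := IH x t (leq_trans (proper_card Hp1) Hk) Hxt.
have H2 := IH t y (leq_trans (proper_card Hp2) Hk) Hty.
exact: ltn_trans H1 H2.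
Qed.

Lemma rank_le {x y : T} : (x <= y)%O -> rho x <= rho y.
Proof.
rewrite le_eqVlt => /orP [/eqP -> //| /rank_lt]; exact: ltnW.
Qed.

Definition chainIn (C : {set T}) : bool :=
  is_chain C && [forall x in C, (z < x)%O && (x < o)%O].

Definition rk (C : {set T}) : {set 'I_n} :=
  [set i : 'I_n | [exists x in C, rho x == (val i).+1]].

Lemma rank_in {x : T} : (z < x)%O -> (x < o)%O -> 0 < rho x <= n.
Proof.
case: Hg => _ _ Hz _ Hzx Hxo.
have := rank_lt Hzx; have := rank_lt Hxo; rewrite Hz Ho ltnS => -> ->; done.
Qed.

Lemma cond_rk (C : {set T}) (S : {set 'I_n}) : chainIn C ->
  ([forall x in C, exists i in S, rho x == (val i).+1] &&
   [forall i in S, exists x in C, rho x == (val i).+1]) = (S == rk C).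
Proof.
move=> /andP [_ /forallP HC].
apply/idP/eqP.
  move=> /andP [/forallP H1 /forallP H2]; apply/setP => i; rewrite inE.
  apply/idP/existsP.
    by move=> iS; move/implyP: (H2 i) => /(_ iS) /existsP [x /andP [xC /eqP e]]; exists x; rewrite xC e eqxx.
  move=> [x /andP [xC /eqP e]].
  move/implyP: (H1 x) => /(_ xC) /existsP [j /andP [jS /eqP e']].
  have : i = j by apply: val_inj; apply: succn_inj; rewrite -e -e'.
  by move=> ->.
move=> ->; apply/andP; split; apply/forallP.
  move=> x; apply/implyP => xC.
  move/implyP: (HC x) => /(_ xC) /andP [Hzx Hxo].
  move/andP: (rank_in Hzx Hxo) => [H0 Hn].
  have Hi : (rho x).-1 < n by rewrite prednK.
  apply/existsP; exists (Ordinal Hi); rewrite /= prednK // eqxx andbT inE.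
  by apply/existsP; exists x; rewrite xC /= prednK.
move=> i; apply/implyP; rewrite inE; done.
Qed.

Local Open Scope ring_scope.

Lemma flag_sum (F : {set 'I_n} -> {poly int}) :
  \sum_(S : {set 'I_n}) (flag_f z o rho S)%:Z *: F S =
  \sum_(C : {set T} | chainIn C) F (rk C).
Proof.
transitivity (\sum_(S : {set 'I_n}) \sum_(C : {set T}) 
   (if chainIn C && (S == rk C) then F S else 0)).
  apply: eq_bigr => S _; rewrite /flag_f -natz scaler_nat -sumr_const big_mkcond /=.
  apply: eq_bigr => C _; rewrite inE.
  case HC: (chainIn C) => /=.
    by move: (HC) => /andP [-> ->] /=; rewrite (cond_rk C S HC).
  by move: HC; rewrite /chainIn; case: (is_chain C); case: [forall x in C, _].
rewrite exchange_big /= [RHS]big_mkcond /=; apply: eq_bigr => C _.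
case HC: (chainIn C) => /=; last by rewrite big1.
by rewrite -big_mkcond big_pred1_eq.
Qed.


Hypothesis He : eulerian rho.

Lemma chain_sub {A B : {set T}} : is_chain A -> B \subset A -> is_chain B.
Proof.
move=> /forallP HA /subsetP BA; apply/forallP => x; apply/implyP => xB.
apply/forallP => y; apply/implyP => yB.
by move/implyP: (HA x) => /(_ (BA _ xB)) /forallP /(_ y) /implyP /(_ (BA _ yB)).
Qed.

Lemma chain_cmp {A : {set T}} {x y : T} : is_chain A -> x \in A -> y \in A ->
  (x <= y)%O || (y <= x)%O.
Proof.
by move=> /forallP HA xA yA; move/implyP: (HA x) => /(_ xA) /forallP /(_ y) /implyP /(_ yA).
Qed.

Lemma chain_min {K : {set T}} : is_chain K -> K != set0 ->
  exists t, t \in K /\ forall x, x \in K -> (t <= x)%O.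
Proof.
move=> HK /set0Pn [x0 Kx0].
case: (arg_minnP rho Kx0) => t Kt Hmin.
exists t; split => // x Kx.
case/orP: (chain_cmp HK Kt Kx) => // Hxt.
move: Hxt; rewrite le_eqVlt => /orP [/eqP -> //|/rank_lt H].
by move: (Hmin x Kx); rewrite leqNgt H.
Qed.

Definition chainOpen (u v : T) (K : {set T}) : bool :=
  is_chain K && [forall x in K, (u < x)%O && (x < v)%O].

Definition ismin (t : T) (K : {set T}) : bool :=
  (t \in K) && [forall x in K, (t <= x)%O].

Local Open Scope ring_scope.

Definition G (u v : T) : rat :=
  \sum_(K : {set T} | chainOpen u v K) (- 2%:R^-1) ^+ #|K|.

Definition sgn (x : T) : rat := (-1) ^+ rho x.

Lemma G_rec (u v : T) :
  G u v = 1 - 2%:R^-1 * \sum_(t | (u < t)%O && (t < v)%O) G t v.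
Proof.
rewrite /G (bigD1 set0) /=; last first.
  apply/andP; split; first by apply/forallP => x; rewrite in_set0.
  by apply/forallP => x; rewrite in_set0.
rewrite cards0 expr0; congr (_ + _).
transitivity (\sum_(K | chainOpen u v K && (K != set0))
   \sum_(t | ismin t K) (- 2%:R^-1 : rat) ^+ #|K|).
  apply: eq_bigr => K /andP [HK K0].
  have [t0 [Kt0 Ht0]] := chain_min (proj1 (andP HK)) K0.
  rewrite (big_pred1 t0) // => t; rewrite /ismin /=.
  apply/andP/eqP => [[Kt /forallP Ht]|->].
    apply: le_anti; rewrite Ht0 //; by move/implyP: (Ht t0) => /(_ Kt0) ->.
  by split=> //; apply/forallP => x; apply/implyP => /Ht0.
rewrite (exchange_big_dep (fun t => (u < t)%O && (t < v)%O)) /=; last first.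
  move=> K t /andP [/andP [_ /forallP HK] _] /andP [Kt _].
  by move/implyP: (HK t) => /(_ Kt).
rewrite mulr_sumr -sumrN; apply: eq_bigr => t /andP [Hut Htv].
rewrite (reindex_onto (fun K' => t |: K') (fun K => K :\ t)) /=; last first.
  by move=> K /andP [_ /andP [Kt _]]; rewrite setD1K.
rewrite -mulNr mulr_sumr.
apply: eq_big => [K'|K' HK'].
  apply/idP/idP.
    move=> /andP [/andP [/andP [/andP [Hch /forallP Hin] _] /andP [_ /forallP Hmin]] /eqP HK].
    have tK' : t \notin K' by rewrite -HK setD11.
    apply/andP; split.
      by apply: (chain_sub Hch); apply/subsetP => x xK; rewrite in_setU1 xK orbT.
    apply/forallP => x; apply/implyP => xK.
    have xt : x \in t |: K' by rewrite in_setU1 xK orbT.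
    move/implyP: (Hmin x) => /(_ xt) Htx.
    move/implyP: (Hin x) => /(_ xt) /andP [_ ->]; rewrite andbT.
    rewrite lt_neqAle Htx andbT; apply/eqP => Ex; by move: tK'; rewrite Ex xK.
  move=> /andP [Hch /forallP Hin].
  have tK' : t \notin K'.
    by apply/negP => tK; move/implyP: (Hin t) => /(_ tK); rewrite ltxx.
  rewrite setU1K // eqxx andbT.
  apply/andP; split; first (apply/andP; split).
  - apply/andP; split.
      apply/forallP => x; apply/implyP; rewrite in_setU1 => /orP [/eqP ->|xK].
        apply/forallP => y; apply/implyP; rewrite in_setU1 => /orP [/eqP ->|yK]; first by rewrite lexx.
        by move/implyP: (Hin y) => /(_ yK) /andP [/ltW ->].
      apply/forallP => y; apply/implyP; rewrite in_setU1 => /orP [/eqP ->|yK].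
        by move/implyP: (Hin x) => /(_ xK) /andP [/ltW ->]; rewrite orbT.
      exact: chain_cmp Hch xK yK.
    apply/forallP => x; apply/implyP; rewrite in_setU1 => /orP [/eqP ->|xK]; first by rewrite Hut Htv.
    move/implyP: (Hin x) => /(_ xK) /andP [Htx ->]; rewrite andbT.
    exact: lt_trans Hut Htx.
  - apply/eqP => E; by move: (setU11 t K'); rewrite E in_set0.
  - rewrite /ismin setU11 /=; apply/forallP => x; apply/implyP; rewrite in_setU1 => /orP [/eqP ->|xK].
      by rewrite lexx.
    by move/implyP: (Hin x) => /(_ xK) /andP [/ltW ->].
have tK' : t \notin K'.
  by move: HK' => /andP [_ /eqP HK]; rewrite -HK setD11.
by rewrite cardsU1 tK' add1n exprS.
Qed.


Lemma euler_sum {u v : T} : (u < v)%O ->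
  \sum_(w | (u <= w)%O && (w <= v)%O) sgn w = 0.
Proof.
move=> Huv; have := He u v Huv; rewrite !cardsE => Hc.
rewrite (bigID (fun w => odd (rho w))) /=.
rewrite (eq_bigr (fun _ => -1)); last by move=> w /andP [_ Ho']; rewrite /sgn -signr_odd Ho'.
rewrite [X in _ + X](eq_bigr (fun _ => 1)); last first.
  by move=> w /andP [_ Ho']; rewrite /sgn -signr_odd (negbTE Ho').
rewrite !sumr_const.
have -> : #|[pred w | ((u <= w)%O && (w <= v)%O) && odd (rho w)]| =
          #|[pred w | ((u <= w)%O && (w <= v)%O) && ~~ odd (rho w)]| by rewrite Hc.
by rewrite mulNrn addNr.
Qed.

Lemma sgn_sq (x : T) : sgn x * sgn x = 1.
Proof. by rewrite /sgn -exprD -signr_odd oddD addbb. Qed.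

Lemma euler_sum1 {u v : T} : (u < v)%O ->
  \sum_(w | (u <= w)%O && (w < v)%O) sgn w = - sgn v.
Proof.
move=> Huv; have := euler_sum Huv.
rewrite (bigD1 v) /=; last by rewrite lexx ltW.
move=> H; apply: (addrI (sgn v)); rewrite subrr -[RHS]H; congr (_ + _).
by apply: eq_bigl => w; rewrite lt_neqAle; case: (u <= w)%O; case: (w != v); case: (w <= v)%O.
Qed.

Lemma split_first {u v : T} (F : T -> rat) : (u < v)%O ->
  \sum_(w | (u <= w)%O && (w < v)%O) F w = F u + \sum_(w | (u < w)%O && (w < v)%O) F w.
Proof.
move=> Huv; rewrite (bigD1 u) /=; last by rewrite lexx Huv.
congr (_ + _); apply: eq_bigl => w.
rewrite [(u < w)%O]lt_neqAle [u == w]eq_sym; by case: (u <= w)%O; case: (w != u); case: (w < v)%O.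
Qed.

Lemma G_key {u v : T} : (u < v)%O ->
  2%:R * sgn u * G u v + \sum_(t | (u < t)%O && (t < v)%O) sgn t * G t v = - 2%:R * sgn v.
Proof.
move=> Huv.
have Hrec w : 2%:R * G w v + \sum_(t | (w < t)%O && (t < v)%O) G t v = 2%:R.
  rewrite {1}G_rec mulrBr mulr1 mulrA divff ?mul1r ?subrK //.
have E1 : \sum_(w | (u <= w)%O && (w < v)%O)
    sgn w * (2%:R * G w v + \sum_(t | (w < t)%O && (t < v)%O) G t v) = - 2%:R * sgn v.
  under eq_bigr do rewrite Hrec.
  rewrite -mulr_suml.
  rewrite euler_sum1 //; ring.
rewrite -E1.
under [RHS]eq_bigr do rewrite mulrDr.
rewrite big_split /=.
rewrite split_first //.
have Ex : \sum_(w | (u <= w)%O && (w < v)%O) sgn w * \sum_(t | (w < t)%O && (t < v)%O) G t v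
   = \sum_(t | (u < t)%O && (t < v)%O) (- sgn t) * G t v.
  under eq_bigr => w _ do rewrite mulr_sumr.
  rewrite (exchange_big_dep (fun t => (u < t)%O && (t < v)%O)) /=; last first.
    move=> w t /andP [Huw _] /andP [Hwt ->]; rewrite andbT; exact: le_lt_trans Huw Hwt.
  apply: eq_bigr => t /andP [Hut Htv].
  rewrite -mulr_suml -(euler_sum1 Hut); congr (_ * _).
  apply: eq_bigl => w; apply/idP/idP.
    by move=> /andP [/andP [-> Hwv] /andP [->]].
  move=> /andP [Huw Hwt]; rewrite Huw Hwt (lt_trans Hwt Htv) Htv //.
rewrite Ex -addrA; congr (_ + _); first by rewrite mulrA [sgn u * _]mulrC.
rewrite -big_split /=; apply: eq_bigr => t _.
ring.
Qed.


Lemma G_rec2 (w v : T) : 2%:R * G w v + \sum_(t | (w < t)%O && (t < v)%O) G t v = 2%:R.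
Proof. by rewrite {1}G_rec mulrBr mulr1 mulrA divff ?mul1r ?subrK. Qed.

Lemma G_sym {u v : T} : (u < v)%O -> G u v = - (sgn u * sgn v) * G u v.
Proof.
pose Y w := - (sgn w * sgn v) * G w v.
have HY w : (w < v)%O -> 2%:R * Y w + \sum_(t | (w < t)%O && (t < v)%O) Y t = 2%:R.
  move=> Hwv; have := G_key Hwv => H.
  have -> : \sum_(t | (w < t)%O && (t < v)%O) Y t =
            - sgn v * \sum_(t | (w < t)%O && (t < v)%O) sgn t * G t v.
    rewrite mulr_sumr; apply: eq_bigr => t _; rewrite /Y; ring.
  have E : \sum_(t | (w < t)%O && (t < v)%O) sgn t * G t v = - 2%:R * sgn v - 2%:R * sgn w * G w v.
    by rewrite -H; ring.
  rewrite E /Y; have := sgn_sq v; move=> Hs.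
  transitivity (2%:R * (sgn v * sgn v) : rat); first by ring.
  by rewrite Hs mulr1.
suff H : forall k w, (#|[set t | (w < t)%O]| <= k)%N -> (w < v)%O -> G w v = Y w.
  by move=> Huv; exact: (H _ u (leqnn _) Huv).
elim=> [|k IH] w Hk Hwv.
  have : (0 < #|[set t | (w < t)%O]|)%N by apply/card_gt0P; exists v; rewrite inE.
  by move: Hk; rewrite leqn0 => /eqP ->.
have Hs : \sum_(t | (w < t)%O && (t < v)%O) G t v = \sum_(t | (w < t)%O && (t < v)%O) Y t.
  apply: eq_bigr => t /andP [Hwt Htv]; apply: IH Htv.
  have Hp : [set s | (t < s)%O] \proper [set s | (w < s)%O].
    apply/properP; split.
      by apply/subsetP => s; rewrite !inE => Hts; exact: lt_trans Hwt Hts.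
    by exists t; rewrite !inE ?ltxx.
  by rewrite -ltnS; exact: leq_trans (proper_card Hp) Hk.
have H1 := G_rec2 w v; have H2 := HY w Hwv.
have : 2%:R * G w v = 2%:R * Y w :> rat.
  by apply: (addIr (\sum_(t | (w < t)%O && (t < v)%O) G t v)); rewrite {2}Hs H1 H2.
by move/mulfI; apply; rewrite Num.Theory.pnatr_eq0.
Qed.

Lemma G_zero {u v : T} : (u < v)%O -> ~~ odd (rho u + rho v) -> G u v = 0.
Proof.
move=> Huv Hp; have := G_sym Huv.
rewrite /sgn -exprD -signr_odd (negbTE Hp) expr0 mulN1r => H.
have : 2%:R * G u v = 0 :> rat by rewrite mulr_natl mulr2n {1}H addNr.
by move/eqP; rewrite mulf_eq0 Num.Theory.pnatr_eq0 /= => /eqP.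
Qed.

Definition PJ (J : {set 'I_n}) : {poly rat} :=
  \prod_(i < n) (if i \in J then 1 + 'X^((val i).+1) else 1 - 'X^((val i).+1)).

Definition cJ (J R : {set 'I_n}) : rat :=
  \prod_(i < n) (if i \in J then (if i \in R then 2%:R^-1 else 0)
                 else (if i \in R then - 2%:R^-1 else 1)).

Definition W (J : {set 'I_n}) : rat := \sum_(C : {set T} | chainIn C) cJ J (rk C).

Lemma half2 : (2%:R^-1 : rat) *+ 2 = 1.
Proof. by rewrite -(mulr_natr (2%:R^-1 : rat) 2) mulVf. Qed.

Lemma expand (R : {set 'I_n}) :
  \prod_(i < n) (if i \in R then 'X^((val i).+1) else 1 - 'X^((val i).+1)) =
  \sum_(J : {set 'I_n}) cJ J R *: PJ J.
Proof.
transitivity (\prod_(i < n)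
   ((if i \in R then 2%:R^-1 else 0) *: (1 + 'X^((val i).+1)) +
    (if i \in R then - 2%:R^-1 else 1) *: (1 - 'X^((val i).+1)) : {poly rat})).
  apply: eq_bigr => i _; case: (i \in R); last by rewrite scale0r add0r scale1r.
  rewrite scaleNr -scalerBr.
  have -> : (1 + 'X^((val i).+1)) - (1 - 'X^((val i).+1)) = ('X^((val i).+1) : {poly rat}) *+ 2.
    by rewrite opprB addrC addrA subrK mulr2n.
  by rewrite -scalerMnr scalerMnl half2 scale1r.
rewrite bigA_distr; apply: eq_bigr => J _.
rewrite /cJ /PJ -scaler_prod; apply: eq_bigr => i _; by case: (i \in J).
Qed.

Lemma theta_rat :
  map_poly intr (Theta (ab_index z o rho n)) = \sum_(J : {set 'I_n}) W J *: PJ J.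
Proof.
rewrite ThetaE flag_sum rmorph_sum /=.
transitivity (\sum_(C : {set T} | chainIn C)
  \prod_(i < n) (if i \in rk C then 'X^((val i).+1) else 1 - 'X^((val i).+1)) : {poly rat}).
  apply: eq_bigr => C _; rewrite rmorph_prod; apply: eq_bigr => i _.
  by case: (i \in rk C); rewrite /= ?rmorphB ?rmorph1 rmorphXn /= map_polyX.
rewrite (eq_bigr (fun C => \sum_(J : {set 'I_n}) cJ J (rk C) *: PJ J)); last by move=> C _; rewrite expand.
rewrite exchange_big /=; apply: eq_bigr => J _.
by rewrite /W scaler_suml.
Qed.


Lemma chain_inj {K : {set T}} {x y : T} : is_chain K -> x \in K -> y \in K ->
  rho x = rho y -> x = y.
Proof.
move=> HK xK yK E.
case/orP: (chain_cmp HK xK yK); rewrite le_eqVlt => /orP [/eqP //|/rank_lt]; rewrite E ?ltnn //.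
Qed.

Lemma card_rk {K : {set T}} : is_chain K -> (forall x, x \in K -> (0 < rho x <= n)%N) ->
  #|rk K| = #|K|.
Proof.
move=> HK Hr.
rewrite -!sum1_card.
transitivity (\sum_(x in K) \sum_(i < n) ((rho x == (val i).+1) : nat))%N; last first.
  apply: eq_bigr => x xK; move/andP: (Hr x xK) => [H0 Hn].
  have Hi : ((rho x).-1 < n)%N by rewrite prednK.
  rewrite (bigD1 (Ordinal Hi)) //= prednK // eqxx big1 // => i /eqP Hne.
  case: eqP => // E; exfalso; apply: Hne; apply: val_inj => /=; by rewrite E.
rewrite exchange_big /= [in LHS]big_mkcond /=; apply: eq_bigr => i _.
case Hi: (i \in rk K).
  move: Hi; rewrite inE => /existsP [x0 /andP [x0K /eqP E0]].
  rewrite (bigD1 x0) //= E0 eqxx big1 // => x /andP [xK Hne].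
  case: eqP => // E; move: Hne; rewrite (chain_inj HK xK x0K) ?eqxx //; by rewrite E0 E.
rewrite big1 // => x xK; case: eqP => // E.
have : i \in rk K by rewrite inE; apply/existsP; exists x; rewrite xK E eqxx.
by rewrite Hi.
Qed.

Definition hh (K : {set T}) : rat := \prod_(i < n) (if i \in rk K then - 2%:R^-1 else 1).

Lemma hh_card (K : {set T}) : is_chain K -> (forall x, x \in K -> (0 < rho x <= n)%N) ->
  hh K = (- 2%:R^-1) ^+ #|K|.
Proof.
move=> HK Hr; rewrite /hh -big_mkcond /= prodr_const.
by rewrite (card_rk HK Hr).
Qed.


Lemma rk_memP (C : {set T}) (i : 'I_n) :
  reflect (exists2 x, x \in C & rho x = (val i).+1) (i \in rk C).
Proof.
rewrite inE; apply: (iffP existsP) => [[x /andP [xC /eqP E]]|[x xC E]]; exists x => //.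
by rewrite xC E eqxx.
Qed.

Definition band (a b : nat) : {set T} := [set t | (a < rho t < b)%N].

Definition mk (J : {set 'I_n}) (k : nat) : bool :=
  [|| (k == 0)%N, (k == n.+1)%N | [exists i in J, (val i).+1 == k]].

Lemma cJ_split (J : {set 'I_n}) (a b : nat) (C : {set T}) :
  (forall i, i \in J -> ~~ (a < (val i).+1 < b)%N) ->
  cJ J (rk C) = cJ J (rk (C :\: band a b)) * hh (C :&: band a b).
Proof.
move=> HJ; rewrite /cJ /hh -big_split /=; apply: eq_bigr => i _.
case Hin: (a < (val i).+1 < b)%N.
  have iJ : i \notin J by apply/negP => /HJ; rewrite Hin.
  have iD : i \notin rk (C :\: band a b).
    apply/negP => /rk_memP [x]; rewrite !inE => /andP [Hb _] E.
    by move: Hb; rewrite E Hin.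
  have iE : (i \in rk C) = (i \in rk (C :&: band a b)).
    apply/rk_memP/rk_memP => [[x xC E]|[x xI E]]; exists x => //.
      by rewrite in_setI xC inE E Hin.
    by move: xI; rewrite in_setI => /andP [->].
  by rewrite (negbTE iJ) (negbTE iD) iE mul1r.
have iI : i \notin rk (C :&: band a b).
  apply/negP => /rk_memP [x]; rewrite !inE => /andP [_ Hb] E.
  by move: Hb; rewrite E Hin.
have iE : (i \in rk C) = (i \in rk (C :\: band a b)).
  apply/rk_memP/rk_memP => [[x xC E]|[x xI E]]; exists x => //.
    by rewrite in_setD xC inE E Hin.
  by move: xI; rewrite in_setD => /andP [_ ->].
by rewrite (negbTE iI) iE mulr1.
Qed.

Lemma cJ_sub {J R : {set 'I_n}} : cJ J R != 0 -> J \subset R.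
Proof.
move=> H; apply/subsetP => i iJ; apply/negPn/negP => iR.
move: H; rewrite /cJ (bigD1 i) //= iJ (negbTE iR) mul0r eqxx.
by [].
Qed.


Lemma lt_of_cmp {u v : T} : (u <= v)%O || (v <= u)%O -> (rho u < rho v)%N -> (u < v)%O.
Proof.
move=> /orP [Huv|Hvu] Hr.
  rewrite lt_neqAle Huv andbT; apply/eqP => E; by move: Hr; rewrite E ltnn.
by move: (rank_le Hvu); rewrite leqNgt Hr.
Qed.

Lemma chainIn_sub {A B : {set T}} : chainIn A -> B \subset A -> chainIn B.
Proof.
move=> /andP [HA /forallP HI] BA; apply/andP; split; first exact: chain_sub HA BA.
apply/forallP => x; apply/implyP => xB.
by move/implyP: (HI x) => /(_ (subsetP BA _ xB)).
Qed.

Lemma chainIn_mem {A : {set T}} {x : T} : chainIn A -> x \in A -> (z < x)%O && (x < o)%O.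
Proof. by move=> /andP [_ /forallP HI] xA; move/implyP: (HI x) => /(_ xA). Qed.

Lemma W_zero (J : {set 'I_n}) (a b : nat) :
  (a < b)%N -> (b <= n.+1)%N -> mk J a -> mk J b ->
  (forall k, (a < k < b)%N -> ~~ mk J k) -> ~~ odd (b - a) -> W J = 0.
Proof.
move=> Hab Hbn Ha Hb Hgap Hpar.
have [Hz Hot Hz0 _] := Hg.
set B := band a b.
have HJ : forall i, i \in J -> ~~ (a < (val i).+1 < b)%N.
  move=> i iJ; apply/negP => Hi.
  have : mk J (val i).+1 by rewrite /mk; apply/orP; right; apply/orP; right; apply/existsP; exists i; rewrite iJ eqxx.
  by rewrite (negbTE (Hgap _ Hi)).
rewrite /W (eq_bigr (fun C => cJ J (rk (C :\: B)) * hh (C :&: B))); last by move=> C _; apply: cJ_split.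
rewrite (partition_big (fun C => C :\: B) predT) //=.
apply: big1 => C' _.
rewrite (eq_bigr (fun C => cJ J (rk C') * hh (C :&: B))); last by move=> C /andP [_ /eqP ->].
rewrite -mulr_sumr.
case: (eqVneq (cJ J (rk C')) 0) => [->|Hc]; first by rewrite mul0r.
apply/eqP; rewrite mulf_eq0; apply/orP; right; apply/eqP.
case: (pickP (fun C => chainIn C && (C :\: B == C'))) => [C0 /andP [HC0 /eqP E0]|Hnone]; last first.
  by rewrite big_pred0.
have HJC := cJ_sub Hc.
have HC' : chainIn C' by apply: (chainIn_sub HC0); rewrite -E0 subsetDl.
have C'B : forall x, x \in C' -> x \notin B by move=> x; rewrite -E0 in_setD => /andP [].
have [u [Hu1 Hu2]] : exists u, rho u = a /\ ((u == z) || (u \in C')).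
  case: (eqVneq a 0%N) => [Ea|Ha0].
    by exists z; split; [rewrite Ea | rewrite eqxx].
  move: Ha; rewrite /mk (negbTE Ha0) /= => /orP [/eqP Ean|/existsP [i /andP [iJ /eqP Ei]]].
    by move: (leq_trans Hab Hbn); rewrite Ean ltnn.
  have /rk_memP [x xC Ex] := subsetP HJC i iJ.
  by exists x; split; [rewrite Ex Ei | rewrite xC orbT].
have [v [Hv1 Hv2]] : exists v, rho v = b /\ ((v == o) || (v \in C')).
  case: (eqVneq b n.+1) => [Eb|Hb1].
    by exists o; split; [rewrite Eb | rewrite eqxx].
  have Hb0 : (b == 0)%N = false by apply/negbTE; rewrite -lt0n; exact: leq_ltn_trans (leq0n a) Hab.
  move: Hb; rewrite /mk Hb0 (negbTE Hb1) /= => /existsP [i /andP [iJ /eqP Ei]].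
  have /rk_memP [x xC Ex] := subsetP HJC i iJ.
  by exists x; split; [rewrite Ex Ei | rewrite xC orbT].
have cmp_u : forall y, y \in C' -> (y <= u)%O || (u <= y)%O.
  move=> y yC; case/orP: Hu2 => [/eqP ->|uC]; first by rewrite Hz orbT.
  exact: chain_cmp (proj1 (andP HC')) yC uC.
have cmp_v : forall y, y \in C' -> (y <= v)%O || (v <= y)%O.
  move=> y yC; case/orP: Hv2 => [/eqP ->|vC]; first by rewrite Hot.
  exact: chain_cmp (proj1 (andP HC')) yC vC.
have Hzu : (z <= u)%O by apply: Hz.
have Hvo : (v <= o)%O by apply: Hot.
have Huv : (u < v)%O.
  apply: lt_of_cmp; last by rewrite Hu1 Hv1.
  case/orP: Hu2 => [/eqP ->|uC]; first by rewrite Hz.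
  case/orP: Hv2 => [/eqP ->|vC]; first by rewrite Hot.
  exact: chain_cmp (proj1 (andP HC')) uC vC.
have Hpar' : ~~ odd (rho u + rho v).
  by rewrite Hu1 Hv1 oddD addbC -oddB // ltnW.
rewrite (reindex_onto (fun K => C' :|: K) (fun C => C :&: B)) /=; last first.
  by move=> C /andP [_ /eqP EC]; rewrite -EC setUC setID.
rewrite -[RHS](G_zero Huv Hpar') /G.
apply: eq_big => [K|K].
  apply/idP/idP.
    move=> /andP [/andP [HCK _] /eqP EK].
    have KB : forall x, x \in K -> x \in B by move=> x; rewrite -EK in_setI => /andP [].
    have KC : K \subset C' :|: K by apply/subsetP => x xK; rewrite in_setU xK orbT.
    apply/andP; split; first exact: chain_sub (proj1 (andP HCK)) KC.
    apply/forallP => x; apply/implyP => xK.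
    have xCK : x \in C' :|: K by rewrite in_setU xK orbT.
    move: (KB x xK); rewrite inE => /andP [Hax Hxb].
    apply/andP; split.
      apply: lt_of_cmp; last by rewrite Hu1.
      case/orP: Hu2 => [/eqP ->|uC]; first by rewrite Hz.
      apply: chain_cmp (proj1 (andP HCK)) _ xCK; by rewrite in_setU uC.
    apply: lt_of_cmp; last by rewrite Hv1.
    case/orP: Hv2 => [/eqP ->|vC]; first by rewrite Hot.
    apply: chain_cmp (proj1 (andP HCK)) xCK _; by rewrite in_setU vC.
  move=> /andP [HK /forallP HKI].
  have Kin : forall x, x \in K -> (u < x)%O && (x < v)%O by move=> x xK; move/implyP: (HKI x) => /(_ xK).
  have KB : forall x, x \in K -> x \in B.
    move=> x /Kin /andP [/rank_lt Hux /rank_lt Hxv]; by rewrite inE -Hu1 -Hv1 Hux Hxv.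
  have EK : (C' :|: K) :&: B = K.
    apply/setP => y; rewrite in_setI in_setU; apply/idP/idP.
      by move=> /andP [/orP [yC|//] yB]; move: (C'B y yC); rewrite yB.
    by move=> yK; rewrite yK orbT KB.
  have ED : (C' :|: K) :\: B = C'.
    apply/setP => y; rewrite in_setD in_setU; apply/idP/idP.
      by move=> /andP [yB /orP [//|yK]]; move: yB; rewrite KB.
    by move=> yC; rewrite yC (C'B y yC).
  rewrite EK ED !eqxx !andbT.
  have cross : forall y x, y \in C' -> x \in K -> (y <= x)%O || (x <= y)%O.
    move=> y x yC xK; move/andP: (Kin x xK) => [Hux Hxv].
    case/orP: (cmp_u y yC) => [Hyu|Huy]; first by rewrite (le_trans Hyu (ltW Hux)).
    case/orP: (cmp_v y yC) => [Hyv|Hvy]; last by rewrite (le_trans (ltW Hxv) Hvy) orbT.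
    have := C'B y yC; rewrite inE negb_and -!leqNgt.
    have Ha' := rank_le Huy; have Hb' := rank_le Hyv.
    rewrite Hu1 in Ha'; rewrite Hv1 in Hb'.
    case/orP => [Hya|Hby].
      have Ey : rho y = rho u by rewrite Hu1; apply/eqP; rewrite eqn_leq Hya Ha'.
      move: Huy; rewrite le_eqVlt => /orP [/eqP <-|/rank_lt]; last by rewrite Ey ltnn.
      by rewrite (ltW Hux).
    have Ey : rho y = rho v by rewrite Hv1; apply/eqP; rewrite eqn_leq Hby Hb'.
    move: Hyv; rewrite le_eqVlt => /orP [/eqP ->|/rank_lt]; last by rewrite Ey ltnn.
    by rewrite (ltW Hxv) orbT.
  apply/andP; split.
    apply/forallP => x; apply/implyP; rewrite in_setU => /orP [xC|xK].
      apply/forallP => y; apply/implyP; rewrite in_setU => /orP [yC|yK].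
        exact: chain_cmp (proj1 (andP HC')) xC yC.
      exact: cross.
    apply/forallP => y; apply/implyP; rewrite in_setU => /orP [yC|yK].
      by rewrite orbC; apply: cross.
    exact: chain_cmp HK xK yK.
  apply/forallP => x; apply/implyP; rewrite in_setU => /orP [xC|xK].
    exact: chainIn_mem HC' xC.
  move/andP: (Kin x xK) => [Hux Hxv].
  by rewrite (le_lt_trans Hzu Hux) (lt_le_trans Hxv Hvo).
move=> /andP [/andP [HCK _] /eqP EK]; rewrite EK.
apply: hh_card; first by apply: (chain_sub (proj1 (andP HCK))); apply/subsetP => x xK; rewrite in_setU xK orbT.
move=> x xK; have := chainIn_mem HCK (x := x).
rewrite in_setU xK orbT => /(_ isT) /andP [H1 H2]; exact: rank_in H1 H2.
Qed.


Definition good (J : {set 'I_n}) : Prop :=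
  forall a b, (a < b)%N -> (b <= n.+1)%N -> mk J a -> mk J b ->
     (forall k, (a < k < b)%N -> ~~ mk J k) -> odd (b - a).

Lemma PJ_div (J : {set 'I_n}) : good J -> (1 + 'X : {poly rat}) ^+ (n.+1)./2 %| PJ J.
Proof.
move=> HJ.
have E : PJ J = \prod_(1 <= k < n.+1) (if mk J k then 1 + 'X^k else 1 - 'X^k).
  rewrite /PJ big_add1 /= [RHS]big_mkord; apply: eq_bigr => i _.
  have -> : mk J (val i).+1 = (i \in J).
    rewrite /mk /= eqSS; have -> : (val i == n) = false by apply/negbTE; rewrite neq_ltn ltn_ord.
    apply/existsP/idP => [[j /andP [jJ /eqP Ej]]|iJ].
      by have -> : i = j by apply: val_inj; apply: succn_inj.
    by exists i; rewrite iJ eqxx.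
  by [].
have := @dvd_marks (mk J) n.+1 HJ 0 n.+1 (ltn0Sn n) (leqnn _).
rewrite /mk !eqxx orbT /= => /(_ isT isT).
by rewrite -E subn0.
Qed.

Lemma dvd_sum_poly (D : {poly rat}) (I : finType) (F : I -> {poly rat}) :
  (forall i, D %| F i) -> D %| \sum_i F i.
Proof.
move=> H; apply: (big_ind (fun p => D %| p)) => //.
by move=> p q Hp Hq; apply: dvdp_add.
Qed.

Lemma theta_div :
  (1 + 'X : {poly rat}) ^+ (n.+1)./2 %| map_poly intr (Theta (ab_index z o rho n)).
Proof.
rewrite theta_rat; apply: dvd_sum_poly => J.
case: (classic (good J)) => [HJ|HJ].
  by rewrite -mul_polyC; apply: dvdp_mull; apply: PJ_div.
have [a [b [H1 [H2 [H3 [H4 [H5 H6]]]]]]] : exists a b, (a < b)%N /\ (b <= n.+1)%N /\ mk J a /\ mk J b /\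
     (forall k, (a < k < b)%N -> ~~ mk J k) /\ ~~ odd (b - a).
  apply: NNPP => Hne; apply: HJ => a b H1 H2 H3 H4 H5.
  case Hodd: (odd (b - a)) => //; exfalso; apply: Hne; exists a, b.
  by rewrite Hodd.
by rewrite (W_zero J a b H1 H2 H3 H4 H5 H6) scale0r dvdp0.
Qed.

End Poset.

Section IntDiv.
Local Open Scope ring_scope.
Lemma int_div (p : {poly int}) (k : nat) :
  (1 + 'X : {poly rat}) ^+ k %| map_poly intr p -> exists r : {poly int}, p = r * (1 + 'X) ^+ k.
Proof.
move=> Hd.
have Mmon : (1 + 'X : {poly int}) ^+ k \is monic.
  by apply: monic_exp; rewrite addrC -[1]polyC1 monicXaddC.
have E := Pdiv.RingMonic.rdivp_eq Mmon p.
set q := Pdiv.CommonRing.rdivp p _ in E; set rr := Pdiv.CommonRing.rmodp p _ in E.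
exists q.
suff Hr : rr = 0 by rewrite {1}E Hr addr0.
have Hmap : map_poly intr ((1 + 'X : {poly int}) ^+ k) = (1 + 'X : {poly rat}) ^+ k.
  by rewrite rmorphXn rmorphD rmorph1 /= map_polyX.
have Hd' : map_poly intr ((1 + 'X : {poly int}) ^+ k) %| map_poly (intr : int -> rat) rr.
  have -> : map_poly (intr : int -> rat) rr =
            map_poly intr p - map_poly intr q * map_poly intr ((1 + 'X : {poly int}) ^+ k).
    by rewrite E rmorphD rmorphM /= addrC addKr.
  rewrite Hmap; apply: dvdp_sub => //; exact: dvdp_mull.
have Hs : (size (map_poly (intr : int -> rat) rr) < size (map_poly (intr : int -> rat) ((1 + 'X : {poly int}) ^+ k)))%N.
  rewrite !size_map_inj_poly ?rmorph0 //; try exact: intr_inj.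
  by rewrite Pdiv.Ring.ltn_rmodp; apply: monic_neq0.
case: (eqVneq (map_poly (intr : int -> rat) rr) 0) => [H0|Hn0].
  apply/eqP; rewrite -size_poly_eq0 -(size_map_inj_poly (f := intr : int -> rat)) ?rmorph0 //.
    by rewrite H0 size_poly0.
  exact: intr_inj.
by move: (dvdp_leq Hn0 Hd'); rewrite leqNgt Hs.
Qed.
End IntDiv.

Theorem mainTheorem5 (d : Order.disp_t) (T : finPOrderType d) (z o : T)
  (rho : T -> nat) (n : nat) :
  graded_with z o rho -> rho o = n.+1 -> eulerian rho ->
  exists r : {poly int},
    Theta (ab_index z o rho n) = (r * (1 + 'X) ^+ (n.+1)./2)%R.
Proof.
move=> Hg Ho He.
have H := @theta_div d T z o rho n Hg Ho He. apply: int_div. exact H.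
Qed.
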